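(* Let $\mathcal{P}$ be a parametrised propositional logic program over a finite alphabet $\Sigma=\Sigma_p\cup\Sigma_d$ that is positive (no negation occurs in rule bodies). Then the parametrised immediate consequence operator $\mathcal{T}_{\mathcal{P}}:L^d_p\to L^d_p$ is monotone, and for every $\Sigma$-interpretation $J$: $J\models_{wf}\mathcal{P}$ if and only if $J\models\mathrm{Th}(\mathrm{lfp}(\mathcal{T}_{\mathcal{P}}))$.
   Context: A parametrised logic program $\mathcal{P}$ is a finite set of rules $h\leftarrow l_1\wedge\dots\wedge l_n$ where $h\in\Sigma_d$ and each $l_i$ is an atom of $\Sigma$ or its negation; $\Sigma_p$ are parameter symbols, $\Sigma_d$ defined symbols. For $q\in\Sigma_d$, $\varphi_q$ is the disjunction of the bodies of all rules with head $q$ (empty disjunction $=$ false, empty body $=$ true). $L_p$: equivalence classes $\overline\varphi$ of propositional formulas over $\Sigma_p$ ordered by entailment; $L^d_p$: maps $\Sigma_d\to L_p$ ordered pointwise (symbolic interpretations). Evaluation of a formula $\varphi$ over $\Sigma$ in $\mathcal{A}\in L^d_p$: replace each $q\in\Sigma_d$ by a representative of $\mathcal{A}(q)$ and keep atoms of $\Sigma_p$, taking the equivalence class; $\mathcal{T}_{\mathcal{P}}(\mathcal{A})(q)=\varphi_q^{\mathcal{A}}$. $\mathrm{Th}(\mathcal{A})$ is the propositional theory $\bigwedge_{q\in\Sigma_d}(q\leftrightarrow\psi_q)$ with $\psi_q$ a representative of $\mathcal{A}(q)$ (unique up to equivalence). Parametrised well-founded semantics: for $I\in 2^{\Sigma_p}$,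 $T^I_{\mathcal{P}}:2^{\Sigma_d}\to 2^{\Sigma_d}$ maps $J'$ to $\{q\mid \varphi_q\text{ true in }I\cup J'\}$, and $\Psi^I_{\mathcal{P}}$ on pairs $(J_1,J_2)$ of $\Sigma_d$-interpretations is Fitting's operator: $\Psi^I_{\mathcal{P}}(J_1,J_2)_1=\{q\mid\exists$ rule with head $q$ whose body is true under Kleene three-valued evaluation in $(J_1,J_2)$ with $\Sigma_p$ fixed to $I\}$, $\Psi^I_{\mathcal{P}}(J_1,J_2)_2=\{q\mid\exists$ rule with head $q$ whose body is not false there$\}$. A partial $\Psi$-stable fixpoint is $(x,y)$ with $x=\mathrm{lfp}(\Psi(\cdot,y)_1)$, $y=\mathrm{lfp}(\Psi(x,\cdot)_2)$, and the $\Psi$-well-founded fixpoint is the least precise such pair (precision: $(x,y)\leq_p(u,v)$ iff $x\subseteq u$, $v\subseteq y$). $J\models_{wf}\mathcal{P}$ iff $(J\cap\Sigma_d,J\cap\Sigma_d)$ is the $\Psi^{J\cap\Sigma_p}_{\mathcal{P}}$-well-founded fixpoint of $T^{J\cap\Sigma_p}_{\mathcal{P}}$. $\models$ is classical propositional satisfaction. *)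

(* Defs.v *)
From mathcomp Require Import all_boot.
Set Implicit Arguments. Unset Strict Implicit. Unset Printing Implicit Defensive.

Inductive form (V : Type) : Type :=
| FTop | FBot | FVar of V | FNot of form V
| FAnd of form V & form V | FOr of form V & form V | FIff of form V & form V.
Arguments FTop {V}. Arguments FBot {V}.

Fixpoint feval (V : Type) (v : V -> bool) (f : form V) : bool :=
  match f with
  | FTop => true | FBot => false | FVar x => v x | FNot g => ~~ feval v g
  | FAnd g h => feval v g && feval v h
  | FOr g h => feval v g || feval v h
  | FIff g h => feval v g == feval v h
  end.

(* classical entailment / equivalence; L_p is formulas over P modulo equiv *)
Definition entails (V : Type) (f g : form V) : Prop :=
  forall v : V -> bool, feval v f -> feval v g.
Definition fequiv (V : Type) (f g : form V) : Prop := entails f g /\ entails g f.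

Fixpoint fmap (V W : Type) (s : V -> form W) (f : form V) : form W :=
  match f with
  | FTop => FTop | FBot => FBot | FVar x => s x | FNot g => FNot (fmap s g)
  | FAnd g h => FAnd (fmap s g) (fmap s h)
  | FOr g h => FOr (fmap s g) (fmap s h)
  | FIff g h => FIff (fmap s g) (fmap s h)
  end.

Section Programs.
Variables (P D : finType). (* Sigma_p = P, Sigma_d = D, Sigma = P + D *)

(* literal: (polarity, atom); polarity true = positive atom, false = negated *)
Record rule := Rule { head : D; body : seq (bool * (P + D)) }.
Definition program := seq rule.

Definition positive_program (prog : program) : bool :=
  all (fun r => all (fun l => l.1) (body r)) prog.

Definition lit_form (l : bool * (P + D)) : form (P + D) :=
  if l.1 then FVar l.2 else FNot (FVar l.2).
Definition body_form (r : rule) : form (P + D) :=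
  foldr (fun l f => FAnd (lit_form l) f) FTop (body r).
Definition phi (prog : program) (q : D) : form (P + D) :=
  foldr (fun r f => FOr (body_form r) f) FBot [seq r <- prog | head r == q].

(* symbolic interpretations L^d_p: representatives D -> form P,
   ordered pointwise by entailment *)
Definition symint := D -> form P.
Definition sle (A B : symint) : Prop := forall q, entails (A q) (B q).
Definition sequiv (A B : symint) : Prop := sle A B /\ sle B A.

Definition eval_sym (A : symint) (f : form (P + D)) : form P :=
  fmap (fun a => match a with inl p => FVar p | inr q => A q end) f.

Definition TP (prog : program) (A : symint) : symint :=
  fun q => eval_sym A (phi prog q).

Definition sym_monotone (F : symint -> symint) : Prop :=
  forall A B, sle A B -> sle (F A) (F B).

Definition is_sym_lfp (F : symint -> symint) (A : symint) : Prop :=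
  sequiv (F A) A /\ forall B, sequiv (F B) B -> sle A B.

Definition lift (f : form P) : form (P + D) := fmap (fun p => FVar (inl p)) f.

Definition Th (A : symint) : form (P + D) :=
  foldr (fun q f => FAnd (FIff (FVar (inr q)) (lift (A q))) f) FTop (enum D).

Definition param_part (J : {set P + D}) : {set P} := [set p | inl p \in J].
Definition def_part (J : {set P + D}) : {set D} := [set q | inr q \in J].

(* Kleene three-valued evaluation of a literal in (J1,J2), params fixed by I *)
Definition lit_true (I : {set P}) (J1 J2 : {set D}) (l : bool * (P + D)) : bool :=
  match l.2 with
  | inl p => (p \in I) == l.1
  | inr d => if l.1 then d \in J1 else d \notin J2
  end.
Definition lit_notfalse (I : {set P}) (J1 J2 : {set D}) (l : bool * (P + D)) : bool :=
  match l.2 with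
  | inl p => (p \in I) == l.1
  | inr d => if l.1 then d \in J2 else d \notin J1
  end.

Definition Psi1 (prog : program) (I : {set P}) (J1 J2 : {set D}) : {set D} :=
  [set q | has (fun r => (head r == q) && all (lit_true I J1 J2) (body r)) prog].
Definition Psi2 (prog : program) (I : {set P}) (J1 J2 : {set D}) : {set D} :=
  [set q | has (fun r => (head r == q) && all (lit_notfalse I J1 J2) (body r)) prog].

Definition is_set_lfp (F : {set D} -> {set D}) (x : {set D}) : Prop :=
  F x = x /\ forall z, F z = z -> x \subset z.

Definition partial_stable (prog : program) (I : {set P}) (x y : {set D}) : Prop :=
  is_set_lfp (fun z => Psi1 prog I z y) x /\ is_set_lfp (fun z => Psi2 prog I x z) y.

(* precision order: (x,y) <=_p (u,v) iff x \subset u and v \subset y *)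
Definition well_founded_fp (prog : program) (I : {set P}) (x y : {set D}) : Prop :=
  partial_stable prog I x y /\
  forall u v, partial_stable prog I u v -> (x \subset u) && (v \subset y).

Definition wf_model (prog : program) (J : {set P + D}) : Prop :=
  well_founded_fp prog (param_part J) (def_part J) (def_part J).

End Programs.

(* Main.v *)
Require Import Defs.
From mathcomp Require Import all_boot.

Set Implicit Arguments. Unset Strict Implicit. Unset Printing Implicit Defensive.

Lemma feval_ext (V : Type) (v w : V -> bool) (f : form V) :
  (forall x, v x = w x) -> feval v f = feval w f.
Proof. by move=> H; elim: f => //= [g->|g->h->|g->h->|g->h->]. Qed.

Lemma fmap_eval (V W : Type) (s : V -> form W) (v : W -> bool) (f : form V) :
  feval v (fmap s f) = feval (fun x => feval v (s x)) f.
Proof. by elim: f => //= [g->|g->h->|g->h->|g->h->]. Qed.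

Lemma has_mono_all (T : Type) (c a b : pred T) (s : seq T) :
  all c s -> (forall x, c x -> a x -> b x) -> has a s -> has b s.
Proof.
move=> H1 H2; elim: s H1 => //= x s IH /andP [cx cs] /orP [ax|hs].
  by rewrite (H2 _ cx ax).
by rewrite (IH cs hs) orbT.
Qed.

Lemma eq_has_all (T : Type) (c a b : pred T) (s : seq T) :
  all c s -> (forall x, c x -> a x = b x) -> has a s = has b s.
Proof. by move=> H1 H2; elim: s H1 => //= x s IH /andP [cx cs]; rewrite H2 // IH. Qed.

Section Proof.
Variables (P D : finType) (prog : program P D).

Definition F (I : {set P}) (J : {set D}) := Psi1 prog I J J.
Definition Iv (v : P -> bool) : {set P} := [set p | v p].
Definition SA (A : symint P D) (v : P -> bool) : {set D} := [set q | feval v (A q)].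

Lemma phi_eval w q : feval w (phi prog q) =
  has (fun r => (Defs.head r == q) && all (fun l => feval w (lit_form l)) (body r)) prog.
Proof.
rewrite /phi; elim: prog => //= r s IH.
case: (Defs.head r == q) => //=; rewrite IH; congr (_ || _).
rewrite /body_form; elim: (body r) => //= l b ->; done.
Qed.

Lemma eval_TP A v q : feval v (TP prog A q) = (q \in F (Iv v) (SA A v)).
Proof.
rewrite /TP /eval_sym fmap_eval phi_eval /F /Psi1 inE.
apply: eq_has => r; congr (_ && _); apply: eq_all => l.
rewrite /lit_form /lit_true; case: l => [[] [p|d]] /=; rewrite ?inE //;
by case: (v p).
Qed.

Hypothesis pos : positive_program prog.

Lemma F_mono I : {homo F I : X Y / X \subset Y}.
Proof.
move=> X Y XY; apply/subsetP => q; rewrite /F /Psi1 !inE.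
apply: has_mono_all pos _ => r pr /andP [hq ba]; rewrite hq /=.
apply/allP => l lin; have := allP ba l lin; have := allP pr l lin.
rewrite /lit_true; case: l {lin} => [[] [p|d]] //= _ dX.
by apply: (subsetP XY).
Qed.

Lemma Psi1E I a b : Psi1 prog I a b = F I a.
Proof.
apply/setP => q; rewrite /F !inE; apply: eq_has_all pos _ => r pr /=.
congr (_ && _); apply: eq_in_all => l lin; have := allP pr l lin.
by rewrite /lit_true; case: l {lin} => [[] [p|d]].
Qed.

Lemma Psi2E I a b : Psi2 prog I a b = F I b.
Proof.
apply/setP => q; rewrite /F !inE; apply: eq_has_all pos _ => r pr /=.
congr (_ && _); apply: eq_in_all => l lin; have := allP pr l lin.
by rewrite /lit_true /lit_notfalse; case: l {lin} => [[] [p|d]].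
Qed.

Definition L I := fixset (F I).

Lemma L_fix I : F I (L I) = L I.
Proof. exact: fixsetK (@F_mono I). Qed.

Lemma L_least I X : F I X = X -> L I \subset X.
Proof.
move=> FX; rewrite /L /fixset; elim: #|_| => /= [|n IH]; first exact: sub0set.
by rewrite -FX; apply: F_mono.
Qed.

Lemma L_lfp I : is_set_lfp (F I) (L I).
Proof. by split; [apply: L_fix | apply: L_least]. Qed.

Lemma lfp_uniq I x : is_set_lfp (F I) x -> x = L I.
Proof.
move=> [fx lx]; apply/eqP; rewrite eqEsubset (L_least fx) andbT.
by apply: lx; apply: L_fix.
Qed.

End Proof.

Lemma lfp_ext (D : finType) (F1 F2 : {set D} -> {set D}) x :
  (forall z, F1 z = F2 z) -> is_set_lfp F1 x -> is_set_lfp F2 x.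
Proof.
move=> E [h1 h2]; split; first by rewrite -E.
by move=> z; rewrite -E; apply: h2.
Qed.

Section Sym.
Variables (P D : finType) (prog : program P D).

Lemma sleE (A B : symint P D) : sle A B <-> forall v, SA A v \subset SA B v.
Proof.
split.
  by move=> H v; apply/subsetP => q; rewrite !inE; apply: H.
by move=> H q v hv; have := subsetP (H v) q; rewrite !inE; apply.
Qed.

Lemma SA_TP A v : SA (TP prog A) v = F prog (Iv v) (SA A v).
Proof. by apply/setP => q; rewrite inE eval_TP. Qed.

Lemma fixE A : sequiv (TP prog A) A <-> forall v, F prog (Iv v) (SA A v) = SA A v.
Proof.
split.
  move=> [/sleE h1 /sleE h2] v; apply/eqP; rewrite eqEsubset -!SA_TP.
  by rewrite h1 h2.
by move=> H; split; apply/sleE => v; rewrite SA_TP H.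
Qed.

Definition charf (I : {set P}) : form P :=
  foldr (fun p f => FAnd (if p \in I then FVar p else FNot (FVar p)) f) FTop (enum P).

Lemma charf_eval I v : feval v (charf I) = (I == Iv v).
Proof.
have -> : feval v (charf I) = all (fun p => (p \in I) == v p) (enum P).
  rewrite /charf; elim: (enum P) => [|p s IH] /=; first done.
  rewrite IH; case: (p \in I) => /=; case: (v p) => /=; done.

apply/idP/eqP.
  move=> H; apply/setP => p; rewrite inE.
  by apply/eqP; apply: (allP H); rewrite mem_enum.
by move=> ->; apply/allP => p _; rewrite inE.
Qed.

Definition mk (g : {set P} -> {set D}) : symint P D := fun q =>
  foldr (fun I f => FOr (if q \in g I then charf I else FBot) f) FBot (enum {set P}).

Lemma SA_mk g v : SA (mk g) v = g (Iv v).
Proof.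
apply/setP => q; rewrite inE.
have -> : feval v (mk g q) = has (fun I => (q \in g I) && (I == Iv v)) (enum {set P}).
  rewrite /mk; elim: (enum {set P}) => //= I s ->.
  by case: (q \in g I); rewrite ?charf_eval.
apply/hasP/idP.
  by move=> [I _ /andP [h /eqP <-]].
by move=> h; exists (Iv v); rewrite ?mem_enum // h eqxx.
Qed.

Lemma lift_eval w (f : form P) : feval w (Defs.lift D f) = feval (fun p => w (inl p)) f.
Proof. by rewrite /Defs.lift fmap_eval. Qed.

Lemma Th_eval (A : symint P D) (J : {set P + D}) :
  feval (fun a => a \in J) (Th A) =
  (def_part J == SA A (fun p => inl p \in J)).
Proof.
have -> : feval (fun a => a \in J) (Th A) =
   all (fun q => (inr q \in J) == feval (fun p => inl p \in J) (A q)) (enum D).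
  rewrite /Th; elim: (enum D) => //= q s ->; by rewrite lift_eval.
apply/idP/eqP.
  move=> H; apply/setP => q; rewrite !inE.
  by apply/eqP; apply: (allP H); rewrite mem_enum.
by move=> E; apply/allP => q _; have := congr1 (fun S : {set D} => q \in S) E; rewrite !inE => ->.
Qed.

Lemma Iv_param (J : {set P + D}) : Iv (fun p => inl p \in J) = param_part J.
Proof. by apply/setP => p; rewrite !inE. Qed.

End Sym.

Theorem theorem4p8 (P D : finType) (prog : program P D) :
  positive_program prog ->
  sym_monotone (TP prog) /\
  (exists A, is_sym_lfp (TP prog) A) /\
  (forall A, is_sym_lfp (TP prog) A ->
     forall J : {set P + D},
       wf_model prog J <-> feval (fun a => a \in J) (Th A)).
Proof.
move=> pos.
have lfpA : is_sym_lfp (TP prog) (mk (L prog)).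
  split.
    by apply/fixE => v; rewrite SA_mk L_fix.
  move=> B /fixE HB; apply/sleE => v; rewrite SA_mk.
  exact: L_least (HB v).
split.
  move=> A B /sleE AB; apply/sleE => v; rewrite !SA_TP.
  exact: F_mono.
split; first by exists (mk (L prog)).
move=> A [/fixE HA leA] J.
have SAE : forall v, SA A v = L prog (Iv v).
  move=> v; apply/eqP; rewrite eqEsubset (L_least pos (HA v)) andbT.
  have /sleE := leA _ lfpA.1 => /(_ v); by rewrite SA_mk.
rewrite Th_eval SAE Iv_param.
have PS : forall I x y, partial_stable prog I x y <-> x = L prog I /\ y = L prog I.
  move=> I x y; split.
    move=> [h1 h2]; split; apply: (lfp_uniq pos).
      by apply: lfp_ext h1 => z; rewrite Psi1E.
    by apply: lfp_ext h2 => z; rewrite Psi2E.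
  move=> [-> ->]; split.
    by apply: lfp_ext (L_lfp pos _) => z; rewrite Psi1E.
  by apply: lfp_ext (L_lfp pos _) => z; rewrite Psi2E.
rewrite /wf_model /well_founded_fp; split.
  by move=> [/PS [-> _] _]; rewrite eqxx.
move=> /eqP E; split; first by apply/PS; rewrite E.
by move=> u v /PS [-> ->]; rewrite E subxx.
Qed.
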